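(* Let $n\ge1$ be an integer, $p\in(0,1)$, $q:=1-p$, and let $j_*:=\lfloor(n+1)p\rfloor+1$. Then for every integer $j\ge j_*$, $$j-\tfrac32<j-1<y_j\le j-\tfrac12<x_j\le y_{j+1}\le j+\tfrac12;$$ moreover, if $j\le n$, then $y_j<j-\frac12$ and $x_j<y_{j+1}$.
   Context: For $j\in\mathbb{Z}$, $q_j:=\mathbf{P}(B_n\ge j)$ and $p_j:=q_j-q_{j+1}=\mathbf{P}(B_n=j)=\binom nj p^jq^{n-j}$, where $B_n$ is binomial with parameters $n,p$. For each integer $j$ with $j_*\le j\le n$ (equivalently $1\le j\le n$ and $j>(n+1)p$, which gives $p_{j-1}>p_j$), define $$x_j:=j-\tfrac12+\frac{q_j}{p_j}+\frac{\frac{q_j}{p_{j-1}}-\frac{q_j}{p_j}}{\ln\frac{p_{j-1}}{p_j}},\qquad y_j:=j-\tfrac12+\frac{q_j}{p_{j-1}}+\frac{\frac{q_j}{p_{j-1}}-\frac{q_j}{p_j}}{\ln\frac{p_{j-1}}{p_j}},$$ and for integers $j\ge n+1$ define $x_j:=j+\frac12$, $y_j:=j-\frac12$. *)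

(* Defs.v *)
From Stdlib Require Import Reals Lra Lia ZArith.
Open Scope R_scope.

Definition pmf (n : nat) (p : R) (j : Z) : R :=
  if ((0 <=? j)%Z && (j <=? Z.of_nat n)%Z)%bool then
    C n (Z.to_nat j) * p ^ (Z.to_nat j) * (1 - p) ^ (n - Z.to_nat j)
  else 0.

Definition tail (n : nat) (p : R) (j : Z) : R :=
  sum_f_R0 (fun k => if (j <=? Z.of_nat k)%Z then pmf n p (Z.of_nat k) else 0) n.

Definition jstar (n : nat) (p : R) : Z := (Int_part ((INR n + 1) * p) + 1)%Z.

Definition corr (n : nat) (p : R) (j : Z) : R :=
  (tail n p j / pmf n p (j - 1) - tail n p j / pmf n p j)
  / ln (pmf n p (j - 1) / pmf n p j).

(* x_j, y_j: formulas for j <= n (used only for j_* <= j <= n),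
   and j + 1/2, j - 1/2 for j >= n+1 *)
Definition xj (n : nat) (p : R) (j : Z) : R :=
  if (j <=? Z.of_nat n)%Z then
    IZR j - 1/2 + tail n p j / pmf n p j + corr n p j
  else IZR j + 1/2.

Definition yj (n : nat) (p : R) (j : Z) : R :=
  if (j <=? Z.of_nat n)%Z then
    IZR j - 1/2 + tail n p j / pmf n p (j - 1) + corr n p j
  else IZR j - 1/2.

(* Main.v *)
Require Import Defs.
From Stdlib Require Import Reals ZArith Lra Lia Bool.
From Coquelicot Require Import Coquelicot.
Open Scope R_scope.


Lemma ln_lt_xm1 x : 0 < x -> x <> 1 -> ln x < x - 1.
Proof.
  intros Hx H1.
  assert (H : x < exp (x - 1)) by (assert (H2 := exp_ineq1 (x-1)); lra).
  rewrite <- (ln_exp (x-1)). apply ln_increasing; lra.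
Qed.

Lemma ln_gt_1m x : 1 < x -> 1 - / x < ln x.
Proof.
  intros Hx.
  assert (Hi : 0 < / x) by (apply Rinv_0_lt_compat; lra).
  assert (Hi1 : / x <> 1).
  { intro E. assert (x = 1) by (rewrite <- (Rinv_inv x), E; field). lra. }
  assert (H := ln_lt_xm1 (/ x) Hi Hi1). rewrite ln_Rinv in H; lra.
Qed.

Lemma ln_gt_2 r : 1 < r -> 2 * (r - 1) / (r + 1) < ln r.
Proof.
  intros Hr.
  set (f := fun x => ln x - 2 * (x - 1) / (x + 1)).
  destruct (MVT_cor2 f (fun x => / x - 4 / (x + 1) ^ 2) 1 r Hr) as [c [Hc1 Hc2]].
  { intros c Hc. apply is_derive_Reals. unfold f.
    auto_derive. lra. field. lra. }
  unfold f in Hc1. rewrite ln_1 in Hc1.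
  assert (Hd : 0 < / c - 4 / (c + 1) ^ 2).
  { replace (/ c - 4 / (c + 1) ^ 2) with ((c - 1)^2 / (c * (c+1)^2)) by (field; lra).
    apply Rdiv_lt_0_compat. nra. apply Rmult_lt_0_compat; nra. }
  assert (0 < (/ c - 4 / (c + 1) ^ 2) * (r - 1)) by (apply Rmult_lt_0_compat; lra).
  replace (2 * (1 - 1) / (1 + 1)) with 0 in Hc1 by field. lra.
Qed.

Lemma phi_decr r r' : 1 < r -> r < r' ->
  (r' - 1) / (r' * ln r') < (r - 1) / (r * ln r).
Proof.
  intros Hr Hr'.
  set (f := fun x => (x - 1) / (x * ln x)).
  destruct (MVT_cor2 f (fun x => (ln x - x + 1) / (x * ln x) ^ 2) r r' Hr') as [c [Hc1 Hc2]].
  { intros c Hc. apply is_derive_Reals. unfold f.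
    assert (0 < ln c) by (rewrite <- ln_1; apply ln_increasing; lra).
    auto_derive. repeat split; try lra. nra. field. split; lra. }
  unfold f in Hc1.
  assert (Hl : 0 < ln c) by (rewrite <- ln_1; apply ln_increasing; lra).
  assert (Hd : (ln c - c + 1) / (c * ln c) ^ 2 < 0).
  { assert (ln c < c - 1) by (apply ln_lt_xm1; lra).
    unfold Rdiv. apply Rmult_neg_pos. lra. apply Rinv_0_lt_compat. 
    apply pow_lt. nra. }
  assert ((ln c - c + 1) / (c * ln c) ^ 2 * (r' - r) < 0).
  { apply Rmult_neg_pos; lra. }
  lra.
Qed.
Lemma keyA a b Q : 0 < b < a -> 0 < Q -> (a - b) * Q < a * b ->
  -1/2 < Q/a + (Q/a - Q/b)/ln(a/b) < 0 /\ 0 < Q/b + (Q/a - Q/b)/ln(a/b).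
Proof.
  intros [Hb Hab] HQ HQb.
  set (r := a / b).
  assert (Hr : 1 < r) by (unfold r; apply (Rmult_lt_reg_r b); [lra|]; field_simplify; lra).
  assert (Ha : a = r * b) by (unfold r; field; lra).
  set (L := ln r).
  assert (HL1 := ln_lt_xm1 r ltac:(lra) ltac:(lra)).
  assert (HL2 := ln_gt_1m r Hr).
  assert (HL3 := ln_gt_2 r Hr).
  fold L in HL1, HL2, HL3.
  assert (HL : 0 < L) by (assert (0 < / r) by (apply Rinv_0_lt_compat; lra);
     assert (/ r < 1) by (rewrite <- Rinv_1; apply Rinv_lt_contravar; lra); lra).
  set (s := Q / b). assert (HQs : Q = s * b) by (unfold s; field; lra).
  set (K := (r - 1) / L).
  assert (E1 : Q/a + (Q/a - Q/b)/L = (s / r) * (1 - K)).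
  { unfold K; rewrite Ha, HQs; field; repeat split; lra. }
  assert (E2 : Q/b + (Q/a - Q/b)/L = s * (1 - K / r)).
  { unfold K; rewrite Ha, HQs; field; repeat split; lra. }
  fold s in E1, E2. rewrite E1, E2.
  assert (Hs : 0 < s) by (unfold s; apply Rdiv_lt_0_compat; lra).
  assert (Hs2 : s * (r - 1) < r).
  { rewrite Ha, HQs in HQb. apply (Rmult_lt_reg_r (b*b)). nra. nra. }
  assert (HK1 : 1 < K).
  { unfold K. apply (Rmult_lt_reg_r L); [lra|]. field_simplify; lra. }
  assert (HK2 : K < r).
  { unfold K. apply (Rmult_lt_reg_r L); [lra|]. field_simplify; [|lra].
    assert (HL2' : (r - 1) < r * L).
    { replace (1 - / r) with ((r - 1) / r) in HL2 by (field; lra).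
      apply (Rmult_lt_compat_l r) in HL2; [|lra]. field_simplify in HL2; lra. }
    lra. }
  assert (HK3 : K <= (r + 1) / 2).
  { unfold K. apply (Rmult_le_reg_r L); [lra|]. field_simplify; [|lra].
    apply (Rmult_lt_compat_l (r+1)) in HL3; [|lra]. field_simplify in HL3; lra. }
  assert (Hsr : 0 < s / r) by (apply Rdiv_lt_0_compat; lra).
  split; [split|].
  - replace (s / r * (1 - K)) with (- (s * (K - 1)) / r) by (field; lra).
    apply (Rmult_lt_reg_r r); [lra|]. field_simplify; [|lra].
    assert (s * (K - 1) <= s * ((r - 1)/2)) by (apply Rmult_le_compat_l; lra).
    assert (s * ((r-1)/2) < r / 2) by lra. lra.
  - apply Rmult_pos_neg; lra.
  - apply Rmult_lt_0_compat; [lra|]. 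
    assert (K / r < 1) by (apply (Rmult_lt_reg_r r); [lra|]; field_simplify; lra). lra.
Qed.

Lemma keyB a b c Q' : 0 < c -> 0 < b < a -> a * c <= b * b -> 0 <= Q' -> (b - c) * Q' < b * c ->
  (b + Q')/b + ((b+Q')/a - (b+Q')/b)/ln(a/b) < 1 + (Q'/b + (Q'/b - Q'/c)/ln(b/c)).
Proof.
  intros Hc [Hb Hab] Hlc HQ HQb.
  set (r := a / b). set (r' := b / c).
  assert (Hr : 1 < r) by (unfold r; apply (Rmult_lt_reg_r b); [lra|]; field_simplify; lra).
  assert (Hrr : r <= r').
  { unfold r, r'. apply (Rmult_le_reg_r (b * c)). nra. field_simplify; nra. }
  assert (Hr' : 1 < r') by lra.
  assert (Ha : a = r * b) by (unfold r; field; lra).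
  assert (Hb' : b = r' * c) by (unfold r'; field; lra).
  set (t := Q' / b). assert (HQt : Q' = t * b) by (unfold t; field; lra).
  assert (Ht : 0 <= t) by (unfold t; apply Rmult_le_pos; [lra|left; apply Rinv_0_lt_compat; lra]).
  assert (Ht2 : t * (r' - 1) < 1).
  { rewrite Hb', HQt in HQb. rewrite Hb' in HQt. apply (Rmult_lt_reg_r (r' * c * c)). nra. nra. }
  assert (HL : 0 < ln r) by (rewrite <- ln_1; apply ln_increasing; lra).
  assert (HL' : 0 < ln r') by (rewrite <- ln_1; apply ln_increasing; lra).
  set (ph := (r - 1) / (r * ln r)). set (ph' := (r' - 1) / (r' * ln r')).
  assert (Hph : ph' <= ph).
  { destruct Hrr as [Hlt|Heq]. left; apply phi_decr; lra. unfold ph, ph'; rewrite Heq; lra. }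
  assert (Hph' : 0 < ph') by (apply Rdiv_lt_0_compat; nra).
  assert (E1 : (b + Q')/b + ((b+Q')/a - (b+Q')/b)/ln(a/b) = (1 + t) * (1 - ph)).
  { fold r. unfold ph. rewrite Ha, HQt. field. repeat split; lra. }
  assert (E2 : Q'/b + (Q'/b - Q'/c)/ln(b/c) = t - t * r' * ph').
  { fold r'. unfold ph'. rewrite HQt, Hb'. field. repeat split; lra. }
  fold r r' t in E1, E2. rewrite E1, E2.
  assert (t * r' * ph' <= t * r' * ph) by (apply Rmult_le_compat_l; nra).
  assert (t * r' * ph < (1 + t) * ph) by (apply Rmult_lt_compat_r; nra).
  lra.
Qed.


Lemma pmf_nat n p i : (i <= n)%nat ->
  pmf n p (Z.of_nat i) = Binomial.C n i * p ^ i * (1 - p) ^ (n - i).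
Proof.
  intros H. unfold pmf.
  replace ((0 <=? Z.of_nat i)%Z && (Z.of_nat i <=? Z.of_nat n)%Z)%bool with true.
  2:{ symmetry. apply andb_true_iff. split; apply Z.leb_le; lia. }
  rewrite Nat2Z.id. reflexivity.
Qed.

Lemma pmf_out n p i : (n < i)%nat -> pmf n p (Z.of_nat i) = 0.
Proof.
  intros H. unfold pmf.
  replace ((0 <=? Z.of_nat i)%Z && (Z.of_nat i <=? Z.of_nat n)%Z)%bool with false.
  reflexivity.
  symmetry. apply andb_false_iff. right. apply Z.leb_gt. lia.
Qed.

Lemma C_pos n i : (i <= n)%nat -> 0 < Binomial.C n i.
Proof.
  intros H. unfold Binomial.C. apply Rdiv_lt_0_compat.
  apply lt_0_INR, lt_O_fact.
  apply Rmult_lt_0_compat; apply lt_0_INR, lt_O_fact.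
Qed.

Lemma pmf_pos n p i : 0 < p < 1 -> (i <= n)%nat -> 0 < pmf n p (Z.of_nat i).
Proof.
  intros Hp H. rewrite pmf_nat by lia.
  apply Rmult_lt_0_compat. apply Rmult_lt_0_compat. apply C_pos; lia.
  apply pow_lt; lra. apply pow_lt; lra.
Qed.

Lemma pmf_ge0 n p i : 0 < p < 1 -> 0 <= pmf n p (Z.of_nat i).
Proof.
  intros Hp. destruct (le_lt_dec i n). left; apply pmf_pos; auto.
  rewrite pmf_out; auto; lra.
Qed.

Lemma pmf_ratio n p i : (i < n)%nat ->
  pmf n p (Z.of_nat (S i)) * INR (S i) * (1 - p) = pmf n p (Z.of_nat i) * INR (n - i) * p.
Proof.
  intros H. rewrite !pmf_nat by lia. rewrite pascal_step3 by lia.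
  replace (n - i)%nat with (S (n - S i)) at 2 by lia.
  simpl pow. field. apply not_0_INR. lia.
Qed.

Lemma sumstep (F : nat -> R) N i :
  sum_f_R0 (fun k => if (Z.of_nat i <=? Z.of_nat k)%Z then F k else 0) N =
  sum_f_R0 (fun k => if (Z.of_nat (S i) <=? Z.of_nat k)%Z then F k else 0) N +
  (if (i <=? N)%nat then F i else 0).
Proof.
  induction N as [|N IH]; cbn [sum_f_R0].
  - destruct (Nat.leb_spec i 0);
    destruct (Z.leb_spec (Z.of_nat i) (Z.of_nat 0));
    destruct (Z.leb_spec (Z.of_nat (S i)) (Z.of_nat 0)); try lia; try lra.
    assert (i = 0%nat) by lia. subst. lra.
  - rewrite IH.
    destruct (Nat.leb_spec i N); destruct (Nat.leb_spec i (S N));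
    destruct (Z.leb_spec (Z.of_nat i) (Z.of_nat (S N)));
    destruct (Z.leb_spec (Z.of_nat (S i)) (Z.of_nat (S N))); try lia; try lra.
    assert (i = S N) by lia. subst. lra.
Qed.

Lemma sumzero (F : nat -> R) N i : (N < i)%nat ->
  sum_f_R0 (fun k => if (Z.of_nat i <=? Z.of_nat k)%Z then F k else 0) N = 0.
Proof.
  induction N as [|N IH]; intros H; cbn [sum_f_R0].
  - destruct (Z.leb_spec (Z.of_nat i) (Z.of_nat 0)); lia || lra.
  - rewrite IH by lia. destruct (Z.leb_spec (Z.of_nat i) (Z.of_nat (S N))); lia || lra.
Qed.
Lemma tail_step n p i : (i <= n)%nat ->
  tail n p (Z.of_nat i) = pmf n p (Z.of_nat i) + tail n p (Z.of_nat (S i)).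
Proof.
  intros H. unfold tail. rewrite sumstep.
  destruct (Nat.leb_spec i n); [lra|lia].
Qed.

Lemma tail_out n p i : (n < i)%nat -> tail n p (Z.of_nat i) = 0.
Proof. intros H. unfold tail. apply sumzero; auto. Qed.

Lemma tail_ge0 n p i : 0 < p < 1 -> 0 <= tail n p (Z.of_nat i).
Proof.
  intros Hp. 
  assert (forall d i, (i + d = S n)%nat -> 0 <= tail n p (Z.of_nat i)).
  { induction d as [|d IH]; intros k Hk.
    - rewrite tail_out by lia. lra.
    - rewrite tail_step by lia. assert (H1 := IH (S k) ltac:(lia)).
      assert (H2 := pmf_ge0 n p k Hp). lra. }
  destruct (le_lt_dec i (S n)).
  apply (H (S n - i)%nat); lia.
  rewrite tail_out by lia; lra.
Qed.

Lemma tail_pos n p i : 0 < p < 1 -> (i <= n)%nat -> 0 < tail n p (Z.of_nat i).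
Proof.
  intros Hp H. rewrite tail_step by lia.
  assert (H1 := tail_ge0 n p (S i) Hp). assert (H2 := pmf_pos n p i Hp H). lra.
Qed.

Lemma logconc n p m0 k : 0 < p < 1 -> (S m0 <= k)%nat ->
  pmf n p (Z.of_nat m0) * pmf n p (Z.of_nat (S k)) <=
  pmf n p (Z.of_nat (S m0)) * pmf n p (Z.of_nat k).
Proof.
  intros Hp Hk. destruct (le_lt_dec n k).
  - rewrite (pmf_out n p (S k)) by lia. rewrite Rmult_0_r.
    apply Rmult_le_pos; apply pmf_ge0; auto.
  - assert (R1 := pmf_ratio n p k ltac:(lia)).
    assert (R2 := pmf_ratio n p m0 ltac:(lia)).
    set (A := pmf n p (Z.of_nat m0) * pmf n p (Z.of_nat (S k))).
    set (B := pmf n p (Z.of_nat (S m0)) * pmf n p (Z.of_nat k)).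
    assert (HB : 0 <= B) by (apply Rmult_le_pos; apply pmf_ge0; auto).
    set (X := INR (n - m0) * INR (S k)). set (Y := INR (S m0) * INR (n - k)).
    assert (HX : 0 < X) by (apply Rmult_lt_0_compat; apply lt_0_INR; lia).
    assert (HYX : Y <= X).
    { unfold X, Y. rewrite <- !mult_INR. apply le_INR. nia. }
    assert (E : A * X * (p * (1 - p)) = B * Y * (p * (1 - p))).
    { unfold A, B, X, Y.
      transitivity ((pmf n p (Z.of_nat m0) * INR (n - m0) * p) * (pmf n p (Z.of_nat (S k)) * INR (S k) * (1 - p))). ring.
      rewrite <- R2, R1. ring. }
    assert (E' : A * X = B * Y).
    { apply (Rmult_eq_reg_r (p * (1 - p))); auto. apply Rgt_not_eq. apply Rmult_lt_0_compat; lra. }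
    assert (B * Y <= B * X) by (apply Rmult_le_compat_l; auto).
    apply (Rmult_le_reg_r X); auto. lra.
Qed.

Lemma tailbound n p m a b : 0 < p < 1 -> 0 < a -> 0 < b -> (m <= n)%nat ->
  (forall k, (m <= k)%nat -> a * pmf n p (Z.of_nat (S k)) <= b * pmf n p (Z.of_nat k)) ->
  (a - b) * tail n p (Z.of_nat m) < a * pmf n p (Z.of_nat m).
Proof.
  intros Hp Ha Hb Hm Hk.
  assert (forall d k, (k + d = n)%nat -> (m <= k)%nat ->
    (a - b) * tail n p (Z.of_nat k) < a * pmf n p (Z.of_nat k)).
  { induction d as [|d IH]; intros k Hd Hmk.
    - rewrite tail_step by lia. rewrite tail_out by lia.
      assert (0 < pmf n p (Z.of_nat k)) by (apply pmf_pos; auto; lia). nra.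
    - rewrite tail_step by lia.
      assert (H1 := IH (S k) ltac:(lia) ltac:(lia)). assert (H2 := Hk k Hmk).
      assert (H3 := Hk (S k) ltac:(lia)). 
      assert (0 <= pmf n p (Z.of_nat (S k))) by (apply pmf_ge0; auto). nra. }
  apply (H (n - m)%nat); lia.
Qed.

Lemma xn_lt a b : 0 < b < a -> b / b + (b / a - b / b) / ln (a / b) < 1.
Proof.
  intros [Hb Hab].
  assert (Hr : 1 < a / b) by (apply (Rmult_lt_reg_r b); [lra|]; field_simplify; lra).
  assert (HL : 0 < ln (a / b)) by (rewrite <- ln_1; apply ln_increasing; lra).
  assert (b / a < 1) by (apply (Rmult_lt_reg_r a); [lra|]; field_simplify; lra).
  replace (b / b) with 1 by (field; lra).
  assert ((b / a - 1) / ln (a / b) < 0).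
  { unfold Rdiv at 2. apply Rmult_neg_pos. lra. apply Rinv_0_lt_compat; lra. }
  lra.
Qed.

Theorem proposition2p9 (n : nat) (p : R) (j : Z) :
  (1 <= n)%nat -> 0 < p < 1 -> (jstar n p <= j)%Z ->
  IZR j - 3/2 < IZR j - 1 /\ IZR j - 1 < yj n p j /\ yj n p j <= IZR j - 1/2 /\
  IZR j - 1/2 < xj n p j /\ xj n p j <= yj n p (j + 1) /\
  yj n p (j + 1) <= IZR j + 1/2 /\
  ((j <= Z.of_nat n)%Z -> yj n p j < IZR j - 1/2 /\ xj n p j < yj n p (j + 1)).
Proof.
  intros Hn Hp Hj.
  unfold jstar in Hj.
  set (x := (INR n + 1) * p) in Hj.
  assert (Hx : 0 < x) by (unfold x; apply Rmult_lt_0_compat; [|lra]; 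
     assert (H := pos_INR n); lra).
  destruct (base_Int_part x) as [HI1 HI2].
  assert (HI0 : (0 <= Int_part x)%Z).
  { destruct (Z.le_gt_cases 0 (Int_part x)) as [h|h]; auto.
    assert (IZR (Int_part x) <= -1) by (apply IZR_le; lia). lra. }
  assert (Hjx : x < IZR j).
  { assert (IZR (Int_part x + 1) <= IZR j) by (apply IZR_le; lia).
    rewrite plus_IZR in H. lra. }
  assert (Hj1 : (1 <= j)%Z) by lia.
  destruct (Z_of_nat_complete j ltac:(lia)) as [m Hm]. subst j.
  assert (Hm1 : (1 <= m)%nat) by lia.
  rewrite <- INR_IZR_INZ in Hjx |- *.
  replace (Z.of_nat m + 1)%Z with (Z.of_nat (S m)) by lia.
  unfold xj, yj, corr.
  replace (Z.of_nat (S m) - 1)%Z with (Z.of_nat m) by lia.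
  rewrite <- !INR_IZR_INZ. rewrite S_INR.
  destruct (le_lt_dec m n) as [Hmn|Hmn].
  2:{ replace (Z.of_nat m <=? Z.of_nat n)%Z with false by (symmetry; apply Z.leb_gt; lia).
      replace (Z.of_nat (S m) <=? Z.of_nat n)%Z with false by (symmetry; apply Z.leb_gt; lia).
      repeat split; try lra. all: intros; lia. }
  replace (Z.of_nat m <=? Z.of_nat n)%Z with true by (symmetry; apply Z.leb_le; lia).
  replace (Z.of_nat m - 1)%Z with (Z.of_nat (m - 1)) by lia.
  set (a := pmf n p (Z.of_nat (m - 1))).
  set (b := pmf n p (Z.of_nat m)).
  set (Q := tail n p (Z.of_nat m)).
  assert (Hb : 0 < b) by (apply pmf_pos; auto).
  assert (HQ : 0 < Q) by (apply tail_pos; auto).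
  assert (Hab : b < a).
  { assert (R := pmf_ratio n p (m - 1) ltac:(lia)).
    replace (S (m - 1)) with m in R by lia. fold a b in R.
    rewrite minus_INR in R by lia. rewrite minus_INR in R by lia.
    replace (INR 1) with 1 in R by reflexivity.
    assert (Hc : (INR n - (INR m - 1)) * p < INR m * (1 - p)) by (unfold x in Hjx; lra).
    assert (Hpos : 0 < (INR n - (INR m - 1)) * p).
    { apply Rmult_lt_0_compat; [|lra]. assert (INR m <= INR n) by (apply le_INR; lia). lra. }
    apply (Rmult_lt_reg_r ((INR n - (INR m - 1)) * p)); auto.
    assert (b * (INR n - (INR m - 1)) * p < b * INR m * (1 - p)).
    { rewrite Rmult_assoc, (Rmult_assoc b (INR m)). apply Rmult_lt_compat_l; lra. }
    lra. }
  assert (HaQ : (a - b) * Q < a * b).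
  { assert (H := tailbound n p m a b Hp ltac:(lra) Hb Hmn).
    apply H.
    intros k Hk. unfold a, b. 
    assert (L := logconc n p (m - 1) k Hp ltac:(lia)).
    replace (S (m - 1)) with m in L by lia. exact L. }
  destruct (keyA a b Q (conj Hb Hab) HQ HaQ) as [[HA1 HA2] HA3].
  assert (Hy : forall c, INR m - 1 / 2 + Q / a + c = INR m - 1/2 + (Q/a + c)) by (intros; ring).
  assert (Hx' : forall c, INR m - 1 / 2 + Q / b + c = INR m - 1/2 + (Q/b + c)) by (intros; ring).
  rewrite Hy, Hx'.
  destruct (Nat.eq_dec m n) as [Hmn'|Hmn'].
  - replace (Z.of_nat (S m) <=? Z.of_nat n)%Z with false by (symmetry; apply Z.leb_gt; lia).
    assert (HQb : Q = b).
    { unfold Q, b. rewrite tail_step by lia. rewrite tail_out by lia. ring. }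
    assert (H := xn_lt a b (conj Hb Hab)).
    assert (H0 : Q/b + (Q/a-Q/b)/ln(a/b) < 1) by (rewrite HQb; exact H).
    repeat split; try lra.
  - replace (Z.of_nat (S m) <=? Z.of_nat n)%Z with true by (symmetry; apply Z.leb_le; lia).
    set (c := pmf n p (Z.of_nat (S m))).
    set (Q' := tail n p (Z.of_nat (S m))).
    assert (Hc : 0 < c) by (apply pmf_pos; auto; lia).
    assert (HQ' : 0 < Q') by (apply tail_pos; auto; lia).
    assert (HQQ : Q = b + Q') by (unfold Q, b, Q'; apply tail_step; lia).
    assert (Hlc : a * c <= b * b).
    { unfold a, b, c. assert (L := logconc n p (m - 1) m Hp ltac:(lia)).
      replace (S (m - 1)) with m in L by lia. exact L. }
    assert (Hcb : c < b) by nra.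
    assert (HbQ : (b - c) * Q' < b * c).
    { assert (H := tailbound n p (S m) b c Hp Hb Hc ltac:(lia)).
      apply H.
      intros k Hk. unfold b, c. apply logconc; auto. }
    destruct (keyA b c Q' (conj Hc Hcb) HQ' HbQ) as [[HB1 HB2] HB3].
    assert (HK := keyB a b c Q' Hc (conj Hb Hab) Hlc ltac:(lra) HbQ).
    rewrite <- HQQ in HK.
    assert (Hy2 : forall d, INR m + 1 - 1 / 2 + Q' / b + d = INR m + 1/2 + (Q'/b + d)) by (intros; lra).
    rewrite Hy2.
    repeat split; try lra.
Qed.
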